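(* Suppose $p_j=1$ for all $j\in[n]$. Then for any constant $\epsilon\in(0,1)$ and any $\alpha\in(0,1)$, IPR with $\rho=2$ is a $(1+\epsilon)(1+\alpha)$-consistent and $(2+1/\alpha)$-robust partitioning algorithm.
   Context: Scheduling with Speed Predictions (SSP). An instance consists of $n$ jobs with processing times $p_1,\dots,p_n\ge 0$ and $m$ machines with true speeds $s_1,\dots,s_m>0$; processing job $j$ on machine $i$ takes time $p_j/s_i$. For a bag (set of jobs) $B$, $p(B)=\sum_{j\in B}p_j$. In the partitioning stage the algorithm receives $\mathbf p$ and predicted speeds $\hat{\mathbf s}\ge0$ (not $\mathbf s$) and partitions $[n]$ into $m$ possibly empty bags. In the scheduling stage $\mathbf s$ is revealed and each bag is assigned whole to a machine; the makespan is $\max_i(\text{total processing time on } i)/s_i$. $opt(\mathbf p,\mathbf s)$ is the minimum makespan of assigning individual jobs knowing $\mathbf s$. A partitioning algorithm is $c$-consistent (resp. $\beta$-robust) if the two-stage algorithm that runs it and then assigns the bags to machines with minimum possible makespan has makespan at most $c\cdot opt(\mathbf p,\mathbf s)$ whenever $\hat{\mathbf s}=\mathbf s$ (resp. at most $\beta\cdot opt(\mathbf p,\mathbf s)$ for all $\mathbf p,\hat{\mathbf s},\mathbf s$). Algorithm IPR. Input: predicted speeds $\hat s_1\ge\dots\ge\hat s_m$, $\mathbf p$, $\alpha$, accuracy $\epsilon\in(0,1)$, $\rho\ge1$. (1) Compute a partition $B_1,\dots,B_m$ with $p(B_1)\ge\dots\ge p(B_m)$ such that putting $B_i$ on machine $i$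 has makespan at most $(1+\epsilon)opt(\mathbf p,\hat{\mathbf s})$ under speeds $\hat{\mathbf s}$. (2) Set $\overline{OPT}_C=\max_i p(B_i)/\hat s_i$ and $\mathcal M_i=\{B_i\}$. (3) While $\max\{p(B): B\in\cup_i\mathcal M_i, |B|\ge2\}>\rho\min\{p(B):B\in\cup_i\mathcal M_i\}$: compute $\mathcal M'=$ LPT-Rebalance$(\mathcal M)$; if $\max_i\sum_{B\in\mathcal M'_i}p(B)/\hat s_i>(1+\alpha)\overline{OPT}_C$ return the current bags $\cup_i\mathcal M_i$; else $\mathcal M\leftarrow\mathcal M'$. (4) Return the bags $\cup_i\mathcal M_i$. LPT-Rebalance: let $B_{\min}$ be a bag of minimum $p(B)$ over all bags, $\mathcal M_{\min}$ its collection, and $\mathcal M_{\max}$ a collection containing a bag of maximum $p(B)$ among bags with at least two jobs. Move $B_{\min}$ into $\mathcal M_{\max}$; let $\ell=|\mathcal M_{\max}|$; pool the jobs of $\mathcal M_{\max}$ and redistribute them into $\ell$ new bags by LPT (jobs in non-increasing processing time, each into a currently least-loaded bag); these form the new $\mathcal M_{\max}$. *)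

(* Defs.v *)
(* with extended reals from mathcomp-analysis (constructive_ereal)
   so that loads on machines of predicted speed 0 get time +oo. *)
From HB Require Import structures.
From mathcomp Require Import all_boot all_order all_algebra all_fingroup.
From mathcomp Require Import reals constructive_ereal.
Set Implicit Arguments. Unset Strict Implicit. Unset Printing Implicit Defensive.
Import Order.TTheory GRing.Theory Num.Theory.
Local Open Scope ring_scope.

Section SSP.
Variable R : realType.
Variables n m : nat.
(* jobs are 'I_n, machines are 'I_m; a partition into m (possibly empty) bags
   is a labelling  a : 'I_n -> 'I_m  (job j lies in bag  a j). *)

Definition ptime (L s : R) : \bar R :=
  if 0 < s then (L / s)%:E else if L == 0 then 0%E else +oo%E.

Definition makespan (f : 'I_n -> 'I_m) (p : 'I_n -> R) (s : 'I_m -> R) : \bar R :=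
  \big[Order.max/0%E]_(i < m) ptime (\sum_(j < n | f j == i) p j) (s i).

Definition opt (p : 'I_n -> R) (s : 'I_m -> R) : \bar R :=
  \big[Order.min/+oo%E]_(f : {ffun 'I_n -> 'I_m}) makespan f p s.

Definition bag_makespan (a : 'I_n -> 'I_m) (p : 'I_n -> R) (s : 'I_m -> R) : \bar R :=
  \big[Order.min/+oo%E]_(g : {ffun 'I_m -> 'I_m}) makespan (fun j => g (a j)) p s.

Definition pB (p : 'I_n -> R) (a : 'I_n -> 'I_m) (k : 'I_m) : R :=
  \sum_(j < n | a j == k) p j.
Definition bsize (a : 'I_n -> 'I_m) (k : 'I_m) : nat := #|[set j | a j == k]|.

Definition ipr_step1 (p : 'I_n -> R) (shat : 'I_m -> R) (eps : R)
    (a : 'I_n -> 'I_m) : Prop :=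
  (exists sigma : {perm 'I_m}, forall i k : 'I_m, (i <= k)%N ->
      shat (sigma k) <= shat (sigma i) /\ pB p a (sigma k) <= pB p a (sigma i))
  /\ (makespan a p shat <= (1 + eps)%:E * opt p shat)%E.

Definition ipr_cond (p : 'I_n -> R) (rho : R) (a : 'I_n -> 'I_m) : Prop :=
  exists k, (2 <= bsize a k)%N /\ exists k', rho * pB p a k' < pB p a k.

(* a' restricted to the job set J is an LPT distribution of J into the bags
   labelled by K: jobs are processed in a non-increasing order of processing
   time (ties arbitrary), each going to a currently least-loaded bag of K
   (ties arbitrary), starting from empty bags. *)
Definition lpt_assign (p : 'I_n -> R) (J : {set 'I_n}) (K : {set 'I_m})
    (a' : 'I_n -> 'I_m) : Prop :=
  exists js : seq 'I_n,
    [/\ uniq js, (forall j, (j \in js) = (j \in J)),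
        sorted (fun x y => p y <= p x) js &
        forall js1 j js2, js = js1 ++ j :: js2 ->
          a' j \in K /\
          forall k, k \in K ->
            \sum_(x <- js1 | a' x == a' j) p x <= \sum_(x <- js1 | a' x == k) p x].

(* LPT-Rebalance.  State: a (job -> bag) and own (bag -> machine collection). *)
Definition lpt_rebalance (p : 'I_n -> R) (a : 'I_n -> 'I_m) (own : 'I_m -> 'I_m)
    (a' : 'I_n -> 'I_m) (own' : 'I_m -> 'I_m) : Prop :=
  exists kmin kmax : 'I_m,
    [/\ (forall k, pB p a kmin <= pB p a k),
        (2 <= bsize a kmax)%N,
        (forall k, (2 <= bsize a k)%N -> pB p a k <= pB p a kmax),
        own' = (fun k => if k == kmin then own kmax else own k) &
        let K := [set k | own' k == own kmax] in
        let J := [set j | a j \in K] in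
        lpt_assign p J K a' /\ (forall j, j \notin J -> a' j = a j)].

(* Step (3), the while loop; optc is OPT_C; the last index is the output. *)
Inductive ipr_loop (p : 'I_n -> R) (shat : 'I_m -> R) (alpha rho : R)
    (optc : \bar R) : ('I_n -> 'I_m) -> ('I_m -> 'I_m) -> ('I_n -> 'I_m) -> Prop :=
| ipr_stop_cond a own :
    ~ ipr_cond p rho a -> ipr_loop p shat alpha rho optc a own a
| ipr_stop_exceed a own a' own' :
    ipr_cond p rho a -> lpt_rebalance p a own a' own' ->
    ((1 + alpha)%:E * optc < makespan (fun j => own' (a' j)) p shat)%E ->
    ipr_loop p shat alpha rho optc a own a
| ipr_continue a own a' own' out :
    ipr_cond p rho a -> lpt_rebalance p a own a' own' ->
    ~ ((1 + alpha)%:E * optc < makespan (fun j => own' (a' j)) p shat)%E ->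
    ipr_loop p shat alpha rho optc a' own' out ->
    ipr_loop p shat alpha rho optc a own out.

(* out is a possible output (bag partition) of IPR(shat, p, alpha, eps, rho).
   OPT_C = max_i p(B_i)/shat_i is exactly makespan a0 p shat. *)
Definition IPR (p : 'I_n -> R) (shat : 'I_m -> R) (alpha eps rho : R)
    (out : 'I_n -> 'I_m) : Prop :=
  exists a0, ipr_step1 p shat eps a0 /\
    ipr_loop p shat alpha rho (makespan a0 p shat) a0 (fun k => k) out.

End SSP.

(* Main.v *)
Require Import Defs.
From HB Require Import structures.
From mathcomp Require Import all_boot all_order all_algebra all_fingroup.
From mathcomp Require Import reals constructive_ereal.
From mathcomp Require Import ring lra zify.
Import Order.TTheory GRing.Theory Num.Theory.
Local Open Scope ring_scope.

Lemma assign_lemma (R : realFieldType) (m : nat) (w c : 'I_m -> R) (C : R) :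
  2 <= C -> (forall k, 0 <= w k) -> (forall i, 0 <= c i) ->
  (forall k k', w k <= C * w k') ->
  \sum_k w k <= \sum_i c i ->
  exists g : 'I_m -> 'I_m, forall i, \sum_(k | g k == i) w k <= C * c i.
Proof.
move=> C2 w0 c0 wC wc.
have claim : forall t, (t <= m)%N -> exists (A : {set 'I_m}) (g : 'I_m -> 'I_m),
   [/\ #|A| = t, (forall k k', k \in A -> k' \notin A -> w k' <= w k) &
       forall i, \sum_(k in A | g k == i) w k <= C * c i].
  elim=> [_|t IH ltm].
    exists set0, id; split; first by rewrite cards0.
      by move=> k k'; rewrite in_set0.
    move=> i; rewrite big_pred0; last by move=> k; rewrite in_set0.
    by apply: mulr_ge0 => //; lra.
  have [A [g [cA upA fitA]]] := IH (ltnW ltm).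
  have : (0 < #|~: A|)%N by rewrite cardsCs setCK card_ord cA subn_gt0.
  case/card_gt0P => k0 k0A.
  have k0A' : [pred x | x \notin A] k0 by rewrite /= -in_setC.
  case: (@arg_maxP _ _ _ k0 [pred x | x \notin A] w k0A') => k /= kA' kmax.
  have [i0 fit0] : exists i0, \sum_(k' in A | g k' == i0) w k' + w k <= C * c i0.
    case: (pickP (fun i0 => \sum_(k' in A | g k' == i0) w k' + w k <= C * c i0)) => [i0 Hi0|Hn]; first by exists i0.
    exfalso.
    have Hlt : forall i, C * c i < \sum_(k' in A | g k' == i) w k' + w k.
      by move=> i; rewrite ltNge Hn.
    set SA := \sum_(k' in A) w k'.
    have E1 : \sum_i (\sum_(k' in A | g k' == i) w k' + w k) = SA + \sum_(i < m) w k.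
      rewrite big_split /=; congr (_ + _).
      by rewrite /SA [RHS](partition_big g xpredT) //=.
    have H1 : C * \sum_i c i < SA + \sum_(i < m) w k.
      rewrite -E1 mulr_sumr; apply: ltr_sum => //.
      by apply/hasP; exists k; rewrite ?mem_index_enum.
    have HF : 0 <= \sum_(k' < m) (C * w k' - w k - (if k' \in A then w k' else 0)).
      apply: sumr_ge0 => k' _.
      case: ifPn => k'A.
        have := upA _ _ k'A kA'; have := wC k' k'; have := w0 k; nra.
      case: (eqVneq k' k) => [->|nk].
        have := w0 k; nra.
      have := wC k k'; lra.
    rewrite !sumrB -big_mkcond -/SA -mulr_sumr in HF.
    have H2 : C * \sum_k w k <= C * \sum_i c i by apply: ler_wpM2l => //; lra.
    lra.
  exists (k |: A), (fun k' => if k' == k then i0 else g k'); split.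
  - by rewrite cardsU1 kA' cA.
  - move=> k1 k2; rewrite !in_setU1 negb_or => /orP[/eqP ->|k1A] /andP[k2k k2A].
      by apply: kmax; rewrite /= k2A.
    exact: upA.
  - move=> i; case: (eqVneq i0 i) => [<-|ni].
      rewrite (bigD1 k) /=; last by rewrite in_setU1 !eqxx.
      rewrite addrC; apply: le_trans fit0; rewrite lerD2r le_eqVlt; apply/orP; left; apply/eqP.
      apply: eq_bigl => k1; rewrite in_setU1.
      case: (eqVneq k1 k) => [->|nk] /=; first by rewrite (negbTE kA') !andbF.
      by rewrite andbT.
    apply: le_trans (fitA i); rewrite le_eqVlt; apply/orP; left; apply/eqP.
    apply: eq_bigl => k1; rewrite in_setU1.
    case: (eqVneq k1 k) => [->|nk] /=; first by rewrite (negbTE kA') (negbTE ni).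
    by [].
have [A [g [cA _ fitA]]] := claim m (leqnn m).
have AT : A = setT.
  by apply/eqP; rewrite eqEcard subsetT /= cardsT card_ord cA.
exists g => i; apply: le_trans (fitA i); rewrite AT le_eqVlt; apply/orP; left; apply/eqP.
by apply: eq_bigl => k; rewrite in_setT.
Qed.

Section Basics.
Variable R : realType.
Variables n m : nat.
Variable p : 'I_n -> R.
Hypothesis p1 : forall j, p j = 1.

Lemma sum_card (P : pred 'I_n) :
  \sum_(j < n | P j) p j = (#|[set j | P j]|)%:R.
Proof.
rewrite (eq_bigr (fun _ => 1)) //; rewrite -sum1_card natr_sum.
by apply: eq_bigl => j; rewrite inE.
Qed.

Lemma pB_E (a : 'I_n -> 'I_m) k : pB p a k = (bsize a k)%:R.
Proof. by rewrite /pB sum_card. Qed.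

Lemma makespanE (f : 'I_n -> 'I_m) (s : 'I_m -> R) :
  makespan f p s = \big[Order.max/0%E]_(i < m) ptime (#|[set j | f j == i]|)%:R (s i).
Proof. by rewrite /makespan; apply: eq_bigr => i _; rewrite sum_card. Qed.

End Basics.
Arguments sum_card {R n p} p1 P.
Arguments pB_E {R n m p} p1 a k.
Arguments makespanE {R n m p} p1 f s.

Definition ld {n m} (a : 'I_n -> 'I_m) (own : 'I_m -> 'I_m) i := #|[set j | own (a j) == i]|.
Definition cl {m} (own : 'I_m -> 'I_m) i := (\sum_(k < m | own k == i) 1)%N.

Lemma ld_sum {n m} (a : 'I_n -> 'I_m) own i :
  ld a own i = (\sum_(k < m | own k == i) bsize a k)%N.
Proof.
rewrite /ld -sum1_card (partition_big a (fun k => own k == i)) /=; last by move=> j; rewrite inE.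
apply: eq_bigr => k /eqP ok; rewrite /bsize -sum1_card; apply: eq_bigl => j; rewrite !inE.
by case: (eqVneq (a j) k) => [->|]; rewrite ?ok ?eqxx ?andbF.
Qed.

Lemma move_sum {m} (own : 'I_m -> 'I_m) kmin i0 (F : 'I_m -> nat) i :
  ((\sum_(k < m | (if k == kmin then i0 else own k) == i) F k) + (own kmin == i) * F kmin
   = (\sum_(k < m | own k == i) F k) + (i0 == i) * F kmin)%N.
Proof.
rewrite (big_mkcond (fun k => _ == i)) (big_mkcond (fun k => own k == i)) /=.
rewrite [X in (X + _)%N = _](bigD1 kmin) // [X in _ = (X + _)%N](bigD1 kmin) //= eqxx.
have -> : (\sum_(k < m | k != kmin) (if (if k == kmin then i0 else own k) == i then F k else 0))%N
   = (\sum_(k < m | k != kmin) (if own k == i then F k else 0))%N.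
  by apply: eq_bigr => k /negbTE ->.
case: (i0 == i); case: (own kmin == i) => /=; rewrite ?mul1n ?mul0n ?add0n ?addn0 //; rewrite addnC; congr (_ + _); by apply: eq_bigr.
Qed.

Section Ptime.
Variable R : realType.

Lemma ptime_ge0 (L s : R) : 0 <= L -> (0 <= ptime L s)%E.
Proof.
move=> L0; rewrite /ptime; case: ifPn => s0; first by rewrite lee_fin divr_ge0 // ltW.
case: ifPn => // _; exact: leey.
Qed.

Lemma ptime_mono (L1 L2 s : R) : 0 <= s -> 0 <= L1 -> L1 <= L2 -> (ptime L1 s <= ptime L2 s)%E.
Proof.
move=> s0 L10 L12; rewrite /ptime; case: ifPn => sp.
  by rewrite lee_fin ler_pM2r ?invr_gt0.
case: (eqVneq L1 0) => [_|L1n0]; first by case: ifPn => // _; exact: leey.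
have -> : (L2 == 0) = false; last by [].
by apply/negbTE; rewrite gt_eqF //; apply: lt_le_trans L12; rewrite lt_def L1n0.
Qed.

Lemma ptime_pos (L s : R) : 0 < s -> ptime L s = (L / s)%:E.
Proof. by move=> s0; rewrite /ptime s0. Qed.

Lemma ptime_fin_zero (L s : R) (x : R) : 0 <= s -> ~~ (0 < s) -> (ptime L s <= x%:E)%E -> L = 0.
Proof.
move=> _ sp; rewrite /ptime (negbTE sp); case: ifPn => [/eqP //|_].
by rewrite leye_eq.
Qed.

End Ptime.
Arguments ptime_mono {R L1 L2 s} _ _ _.
Arguments ptime_pos {R} L {s} _.
Arguments ptime_fin_zero {R L s x} _ _ _.

Section LPT.
Variable R : realType.
Variables n m : nat.
Variable p : 'I_n -> R.
Hypothesis p1 : forall j, p j = 1.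

Lemma lpt_in (J : {set 'I_n}) (K : {set 'I_m}) a' :
  lpt_assign p J K a' -> forall j, j \in J -> a' j \in K.
Proof.
case=> js [ujs memjs srt H] j jJ.
have jjs : j \in js by rewrite memjs.
have E : js = take (index j js) js ++ j :: drop (index j js).+1 js.
  by rewrite -{2}(nth_index j jjs) -drop_nth ?index_mem ?cat_take_drop.
by case: (H _ _ _ E).
Qed.

Lemma lpt_bal (J : {set 'I_n}) (K : {set 'I_m}) a' :
  lpt_assign p J K a' -> (forall j, j \notin J -> a' j \notin K) ->
  forall k1 k2, k1 \in K -> k2 \in K -> (bsize a' k1 <= (bsize a' k2).+1)%N.
Proof.
move=> HA HJ; case: HA => js [ujs memjs srt H].
pose cnt (s : seq 'I_n) k := \sum_(x <- s | a' x == k) p x.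
have step : forall t, (t <= size js)%N -> forall k1 k2, k1 \in K -> k2 \in K ->
    cnt (take t js) k1 <= cnt (take t js) k2 + 1.
  elim=> [_ k1 k2 _ _|t IH lt k1 k2 k1K k2K].
    by rewrite take0 /cnt !big_nil; lra.
  have x0 : 'I_n by case: (js) lt => [|x _] //; exact x.
  have Hs := H (take t js) (nth x0 js t) (drop t.+1 js).
  rewrite -drop_nth // cat_take_drop in Hs; case: (Hs erefl) => ajK Hmin.
  rewrite (take_nth x0 lt) /cnt !big_rcons /= p1.
  have IH' := IH (ltnW lt).
  rewrite /cnt in IH'.
  case: (eqVneq (a' (nth x0 js t)) k1) => [e1|n1]; case: (eqVneq (a' (nth x0 js t)) k2) => [e2|n2].
  - have := IH' k1 k2 k1K k2K; lra.
  - have := Hmin k2 k2K; rewrite e1; lra.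
  - have := IH' k1 k2 k1K k2K; lra.
  - have := IH' k1 k2 k1K k2K; lra.
have cntE : forall k, k \in K -> cnt js k = (bsize a' k)%:R.
  move=> k kK; rewrite /cnt.
  have pe : perm_eq js (enum J).
    by apply: uniq_perm => //; [exact: enum_uniq | move=> x; rewrite memjs mem_enum].
  rewrite (perm_big _ pe) big_enum_cond /= -(pB_E p1) /pB.
  apply: eq_bigl => x; case: (boolP (x \in J)) => // xJ /=.
  apply/esym/negbTE; apply: contra (HJ x xJ) => /eqP ->; exact: kK.
move=> k1 k2 k1K k2K.
have := step (size js) (leqnn _) k1 k2 k1K k2K.
by rewrite take_size !cntE // natr1 ler_nat.
Qed.

End LPT.
Arguments lpt_in {R n m p J K a'} _ j _.
Arguments lpt_bal {R n m p} p1 {J K a'} _ _ k1 k2 _ _.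

Section Rebal.
Variable R : realType.
Variables n m : nat.
Variable p : 'I_n -> R.
Hypothesis p1 : forall j, p j = 1.

Lemma rebal_facts a own a' own' : lpt_rebalance p a own a' own' ->
  exists kmin kmax : 'I_m,
  [/\ (forall k, bsize a kmin <= bsize a k)%N,
      (2 <= bsize a kmax)%N,
      (forall k, 2 <= bsize a k -> bsize a k <= bsize a kmax)%N,
      own' = (fun k => if k == kmin then own kmax else own k) &
      [/\ (forall i, ld a' own' i = ld a own' i),
          (forall k, own' k != own kmax -> bsize a' k = bsize a k),
          (forall k1 k2, own' k1 = own kmax -> own' k2 = own kmax ->
              bsize a' k1 <= (bsize a' k2).+1)%N &
          (\sum_(k < m | own' k == own kmax) bsize a' k
             = \sum_(k < m | own' k == own kmax) bsize a k)%N]].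
Proof.
case=> kmin [kmax [Hmin H2 Hmax Hown]] /= [HA Hout].
exists kmin, kmax.
set K := [set k | own' k == own kmax] in HA Hout.
set J := [set j | a j \in K] in HA Hout.
have Hin := lpt_in HA.
have HJ : forall j, j \notin J -> a' j \notin K.
  by move=> j jJ; rewrite Hout //; move: jJ; rewrite inE.
have F5 : forall i, ld a' own' i = ld a own' i.
  move=> i; rewrite /ld; apply: eq_card => j; rewrite !inE.
  case: (boolP (j \in J)) => jJ; last by rewrite Hout.
  have h1 := Hin j jJ; have h2 : a j \in K by move: jJ; rewrite inE.
  by move: h1 h2; rewrite !inE => /eqP -> /eqP ->.
split => //.
- by move=> k; have := Hmin k; rewrite !(pB_E p1) ler_nat.
- by move=> k k2; have := Hmax k k2; rewrite !(pB_E p1) ler_nat.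
split => //.
- move=> k kK; rewrite /bsize; apply: eq_card => j; rewrite !inE.
  case: (boolP (j \in J)) => jJ; last by rewrite Hout.
  have h1 := Hin j jJ; have h2 : a j \in K by move: jJ; rewrite inE.
  have kK' : k \notin K by rewrite inE.
  case: (eqVneq (a' j) k) => [e|_]; first by move: h1; rewrite e (negbTE kK').
  case: (eqVneq (a j) k) => [e|//]; by move: h2; rewrite e (negbTE kK').
- move=> k1 k2 e1 e2; apply: (lpt_bal p1 HA HJ); by rewrite inE; apply/eqP.
- by rewrite -!ld_sum F5.
Qed.

End Rebal.
Arguments rebal_facts {R n m p} p1 {a own a' own'} _.

Section Loop.
Variable R : realType.
Variables n m : nat.
Variable p : 'I_n -> R.
Hypothesis p1 : forall j, p j = 1.
Variable shat : 'I_m -> R.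
Hypothesis hs : forall i, 0 <= shat i.
Variable alpha : R.
Hypothesis ha : 0 < alpha.
Variable optc : \bar R.
Hypothesis hoptc : (0 <= optc)%E.

Definition Inv (a : 'I_n -> 'I_m) (own : 'I_m -> 'I_m) : Prop :=
  [/\ (forall i, (ptime (ld a own i)%:R (shat i) <= (1 + alpha)%:E * optc)%E),
      (forall k k', own k = own k' -> (bsize a k <= (bsize a k').+1)%N) &
      (forall cr : R, optc = cr%:E -> forall k0, (forall k, (bsize a k0 <= bsize a k)%N) ->
         forall i, (0 < cl own i)%N ->
         (ld a own i)%:R <= cr * shat i + ((cl own i)%:R - 1) * (bsize a k0)%:R)].

Definition Pout (out : 'I_n -> 'I_m) : Prop :=
  (forall k, (bsize out k <= 1)%N) \/
  (forall k k', (bsize out k)%:R <= (2 + alpha^-1) * (bsize out k')%:R :> R).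

Lemma C_ge2 : 2 <= 2 + alpha^-1 :> R.
Proof. by rewrite lerDl invr_ge0 ltW. Qed.

Lemma cond_fail a : ~ ipr_cond p 2 a -> Pout a.
Proof.
move=> nc; case: (boolP [exists k, (1 < bsize a k)%N]) => [/existsP [kb kb2]|]; last first.
  by move=> /existsPn H; left => k; rewrite leqNgt; apply: H.
right.
have Hle : forall k k', (1 < bsize a k)%N -> (bsize a k)%:R <= 2 * (bsize a k')%:R :> R.
  move=> k k' k2; rewrite leNgt; apply/negP => lt; apply: nc; exists k; split => //.
  by exists k'; rewrite !(pB_E p1).
have C2 := C_ge2.
have ge1 : forall k', 1 <= (bsize a k')%:R :> R.
  move=> k'; have := Hle kb k' kb2; have : 2 <= (bsize a kb)%:R :> R by rewrite ler_nat.
  lra.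
move=> k1 k2; have g2 := ge1 k2.
case: (leqP 2 (bsize a k1)) => h.
  have := Hle k1 k2 h; nra.
have : (bsize a k1)%:R <= (1%N)%:R :> R by rewrite ler_nat -ltnS.
rewrite (_ : (1%N)%:R = 1 :> R) //.
nra.
Qed.

Lemma ld_move (a : 'I_n -> 'I_m) (own : 'I_m -> 'I_m) kmin kmax i :
  (ld a (fun k => if k == kmin then own kmax else own k) i + (own kmin == i) * bsize a kmin
   = ld a own i + (own kmax == i) * bsize a kmin)%N.
Proof. by rewrite !ld_sum move_sum. Qed.

Lemma cl_move (own : 'I_m -> 'I_m) kmin kmax i :
  (cl (fun k => if k == kmin then own kmax else own k) i + (own kmin == i) * 1
   = cl own i + (own kmax == i) * 1)%N.
Proof. by rewrite /cl move_sum. Qed.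

Lemma cl_pos (own : 'I_m -> 'I_m) k : (0 < cl own (own k))%N.
Proof. by rewrite /cl (bigD1 k) //= eqxx. Qed.

Lemma ld_ge (a : 'I_n -> 'I_m) (own : 'I_m -> 'I_m) k : (bsize a k <= ld a own (own k))%N.
Proof. by rewrite ld_sum (bigD1 k) //= leq_addr. Qed.

Lemma exceed_P a own a' own' :
  Inv a own -> lpt_rebalance p a own a' own' ->
  ((1 + alpha)%:E * optc < makespan (fun j => own' (a' j)) p shat)%E ->
  forall k1 k2, (bsize a k1)%:R <= (2 + alpha^-1) * (bsize a k2)%:R :> R.
Proof.
case=> I1 I3 I2 HR Hex.
have hA := ha.
have [kmin [kmax [Hmin H2 Hmax Hown [F5 F6 F7 F8]]]] := rebal_facts p1 HR.
have ha1 : (0 < (1 + alpha)%:E)%E.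
  by rewrite lte_fin addr_gt0.
move: Hex I1 I2; case E : optc => [cr| |] Hex I1 I2; last first.
- by move: hoptc; rewrite E.
- by move: Hex; rewrite muleC gt0_mulye // ltNge leey.
have cr0 : 0 <= cr by move: hoptc; rewrite E lee_fin.
rewrite (makespanE p1) in Hex.
have [i Hi] : exists i, ((1 + alpha)%:E * cr%:E < ptime (ld a' own' i)%:R (shat i))%E.
  case: (pickP (fun i => ((1 + alpha)%:E * cr%:E < ptime (ld a' own' i)%:R (shat i))%E)) => [i Hi|Hn].
    by exists i.
  exfalso; move: Hex; apply/negP; rewrite -leNgt; apply: bigmax_le => [|i _].
    by rewrite -EFinM lee_fin; apply: mulr_ge0 => //; lra.
  by rewrite leNgt Hn.
set i0 := own kmax; set beta := bsize a kmin; set W := bsize a kmax.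
have Hmv := ld_move a own kmin kmax i.
rewrite -Hown -F5 in Hmv.
have Hld : (ld a' own' i <= ld a own i + (i0 == i) * beta)%N.
  by rewrite -Hmv leq_addr.
have ei : i0 = i.
  apply/eqP; apply/negPn/negP => ne.
  move: Hld; rewrite (negbTE ne) mul0n addn0 => Hld.
  have Hld2 : (ld a' own' i)%:R <= (ld a own i)%:R :> R by rewrite ler_nat.
  have := ptime_mono (hs i) (ler0n _ (ld a' own' i)) Hld2.
  move=> /le_trans /(_ (I1 i)) => Hle.
  by move: Hi; rewrite ltNge Hle.
rewrite -ei eqxx mul1n in Hld.
move: Hi; rewrite -ei => Hi.
set L := ld a own i0.
have LW : (W <= L)%N by exact: ld_ge.
have s0 : 0 < shat i0.
  case: (boolP (0 < shat i0)) => // sn.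
  have := I1 i0; rewrite -EFinM => /(ptime_fin_zero (hs i0) sn) /eqP.
  rewrite pnatr_eq0 => /eqP L0; move: LW H2; rewrite /L L0 /W; lia.
move: Hi (I1 i0); rewrite !(ptime_pos _ s0) -EFinM !lte_fin !lee_fin -/L => Hi I1'.
rewrite ltr_pdivlMr // in Hi; rewrite ler_pdivrMr // in I1'.
have Hld' : (ld a' own' i0)%:R <= L%:R + beta%:R :> R by rewrite -natrD ler_nat.
have bpos : (0 < beta)%N.
  rewrite lt0n; apply/negP => /eqP b0; move: Hld'; rewrite b0 addr0 => Hld'; lra.
have b1 : 1 <= beta%:R :> R by rewrite ler1n.
have clp := cl_pos own kmax; rewrite -/i0 in clp.
have I2' := I2 cr erefl kmin Hmin i0 clp.
rewrite -/L -/beta in I2'.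
have bal : (W * cl own i0 <= L + cl own i0)%N.
  rewrite /L ld_sum /cl -big_split /= big_distrr /=.
  apply: leq_sum => k /eqP ok; rewrite muln1 addn1; apply: I3; rewrite ok.
  done.
have bal' : W%:R * (cl own i0)%:R <= L%:R + (cl own i0)%:R :> R.
  by rewrite -natrM -natrD ler_nat.
have l1 : 1 <= (cl own i0)%:R :> R by rewrite ler1n.
have key : alpha * W%:R <= (2 * alpha + 1) * beta%:R.
  set l := (cl own i0)%:R in I2' bal' l1.
  set w := W%:R in bal' *.
  set b := beta%:R in Hld' I2' b1 *.
  set Lr := L%:R in Hld' I2' bal' Hi I1'.
  set X := cr * shat i0 in I2'.
  have eX : (1 + alpha) * cr * shat i0 = (1 + alpha) * X by rewrite /X mulrA.
  rewrite eX in Hi.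
  have h1 : alpha * Lr < b + (1 + alpha) * (l - 1) * b.
    have : (1 + alpha) * (Lr - (l - 1) * b - X) <= 0 by apply: mulr_ge0_le0; lra.
    nra.
  have h2 : alpha * (l * w - l) <= alpha * Lr by apply: ler_wpM2l; lra.
  rewrite leNgt; apply/negP => h3.
  have h4 : l * ((2 * alpha + 1) * b) < l * (alpha * w) by rewrite ltr_pM2l //; lra.
  have h5 : 0 < alpha * (l * (b - 1) + b) by apply: mulr_gt0 => //; nra.
  nra.
have Wb : W%:R <= (2 + alpha^-1) * beta%:R :> R.
  rewrite -(ler_pM2l ha) (_ : alpha * ((2 + alpha^-1) * beta%:R) = (2 * alpha + 1) * beta%:R) //.
  by field; rewrite gt_eqF.
move=> k1 k2.
have b2 : beta%:R <= (bsize a k2)%:R :> R by rewrite ler_nat.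
have C2 := C_ge2.
case: (leqP 2 (bsize a k1)) => h.
  have : (bsize a k1)%:R <= W%:R :> R by rewrite ler_nat; apply: Hmax.
  nra.
have : (bsize a k1)%:R <= (1%N)%:R :> R by rewrite ler_nat -ltnS.
rewrite (_ : (1%N)%:R = 1 :> R) //.
nra.
Qed.

Lemma inv_step a own a' own' :
  Inv a own -> lpt_rebalance p a own a' own' ->
  ~ ((1 + alpha)%:E * optc < makespan (fun j => own' (a' j)) p shat)%E ->
  Inv a' own'.
Proof.
case=> I1 I3 I2 HR Hnex.
have hA := ha.
have [kmin [kmax [Hmin H2 Hmax Hown [F5 F6 F7 F8]]]] := rebal_facts p1 HR.
have own'E : forall k, own' k = if k == kmin then own kmax else own k by rewrite Hown.
split.
- move=> i; have : (makespan (fun j => own' (a' j)) p shat <= (1 + alpha)%:E * optc)%E.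
    by rewrite leNgt; apply/negP.
  rewrite (makespanE p1) => /bigmax_leP [_ H]; exact: H.
- move=> k k' e; case: (eqVneq (own' k) (own kmax)) => ek.
    by apply: F7 => //; rewrite -e.
  have ek' : own' k' != own kmax by rewrite -e.
  rewrite !F6 //; apply: I3.
  move: ek ek' e; rewrite !own'E.
  case: (eqVneq k kmin) => [_|_]; first by rewrite eqxx.
  by case: (eqVneq k' kmin) => [_|_] //; rewrite eqxx.
move=> cr E k0' Hk0' i clp.
have bb : (bsize a kmin <= bsize a' k0')%N.
  case: (boolP (own' k0' == own kmax)) => ek; last by rewrite F6 //; exact: Hmin.
  rewrite leqNgt; apply/negP => lt.
  have := F8; rewrite (bigD1 k0' ek) /= [X in _ = X](bigD1 k0' ek) /=.
  set A := (X in (_ + X = _)%N); set B := (X in (_ = _ + X)%N) => e.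
  have S1 : (A <= B)%N.
    apply: leq_sum => k /andP [kK _].
    have := F7 k k0' (eqP kK) (eqP ek); have := Hmin k; lia.
  have := Hmin k0'; lia.
have Hmv := ld_move a own kmin kmax i; rewrite -Hown -F5 in Hmv.
have Hcm := cl_move own kmin kmax i; rewrite -Hown in Hcm.
have bbr : (bsize a kmin)%:R <= (bsize a' k0')%:R :> R by rewrite ler_nat.
have I2i := fun h => I2 cr E kmin Hmin i h.
have b0 : 0 <= (bsize a kmin)%:R :> R by exact: ler0n.
case: (boolP (own kmin == i)) => e1; case: (boolP (own kmax == i)) => e2.
- rewrite e1 e2 !mul1n in Hmv Hcm.
  have eL : ld a' own' i = ld a own i by lia.
  have eC : cl own' i = cl own i by lia.
  rewrite eL eC; rewrite eC in clp; have := I2i clp.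
  have : 1 <= (cl own i)%:R :> R by rewrite ler1n.
  nra.
- rewrite e1 (negbTE e2) mul1n mul0n addn0 in Hmv Hcm.
  have eL : (ld a' own' i + bsize a kmin = ld a own i)%N by lia.
  have eC : (cl own' i + 1 = cl own i)%N by lia.
  have clp2 : (0 < cl own i)%N by lia.
  have := I2i clp2; rewrite -eL -eC !natrD.
  have : 1 <= (cl own' i)%:R :> R by rewrite ler1n.
  nra.
- rewrite (negbTE e1) e2 mul1n mul0n addn0 in Hmv Hcm.
  have eL : (ld a' own' i = ld a own i + bsize a kmin)%N by lia.
  have eC : (cl own' i = cl own i + 1)%N by lia.
  have clp2 : (0 < cl own i)%N by rewrite -(eqP e2); exact: cl_pos.
  have := I2i clp2; rewrite eL eC !natrD.
  have : 1 <= (cl own i)%:R :> R by rewrite ler1n.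
  nra.
- rewrite (negbTE e1) (negbTE e2) !mul0n !addn0 in Hmv Hcm.
  rewrite Hmv Hcm; rewrite Hcm in clp; have := I2i clp.
  have : 1 <= (cl own i)%:R :> R by rewrite ler1n.
  nra.
Qed.

Lemma c_ge0 : (0 <= (1 + alpha)%:E * optc)%E.
Proof. by apply: mule_ge0 => //; rewrite lee_fin; have := ha; lra. Qed.

Lemma loop_main a own out : ipr_loop p shat alpha 2 optc a own out -> Inv a own ->
  (exists own2 : 'I_m -> 'I_m,
     (makespan (fun j => own2 (out j)) p shat <= (1 + alpha)%:E * optc)%E) /\ Pout out.
Proof.
elim=> {a own out} [a own nc|a own a' own' c HR Hex|a own a' own' out c HR Hnex _ IH] Hinv.
- split; last exact: cond_fail.
  exists own; case: Hinv => I1 _ _; rewrite (makespanE p1).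
  by apply: bigmax_le => [|i _]; [exact: c_ge0 | exact: I1].
- split; last by right; exact: (@exceed_P _ _ _ _ Hinv HR Hex).
  exists own; case: Hinv => I1 _ _; rewrite (makespanE p1).
  by apply: bigmax_le => [|i _]; [exact: c_ge0 | exact: I1].
- exact: IH (@inv_step _ _ _ _ Hinv HR Hnex).
Qed.

Lemma inv_init a0 : optc = makespan a0 p shat -> Inv a0 (fun k => k).
Proof.
move=> Eo.
have term : forall i, (ptime (ld a0 (fun k => k) i)%:R (shat i) <= optc)%E.
  by move=> i; rewrite Eo (makespanE p1); exact: (le_bigmax _ (fun i => ptime _ (shat i)) i).
split.
- move=> i; apply: le_trans (term i) _; apply: lee_pemull => //.
  by rewrite lee_fin; have := ha; lra.
- by move=> k k' ->.
move=> cr E k0 _ i _.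
have -> : cl (fun k => k) i = 1%N by rewrite /cl big_pred1_eq.
rewrite subrr mul0r addr0.
have cr0 : 0 <= cr by move: hoptc; rewrite E lee_fin.
have := term i; rewrite E.
case: (boolP (0 < shat i)) => sp.
  by rewrite (ptime_pos _ sp) lee_fin ler_pdivrMr.
move/(ptime_fin_zero (hs i) sp) => ->.
by apply: mulr_ge0.
Qed.

End Loop.


Arguments loop_main {R n m p} p1 {shat} hs {alpha} ha {optc} hoptc {a own out} _ _.
Arguments inv_init {R n m p} p1 {shat} hs {alpha} ha {optc} hoptc a0 _.

Lemma sum_bsize n m (a : 'I_n -> 'I_m) : (\sum_(k < m) bsize a k = n)%N.
Proof.
rewrite -[n in RHS]card_ord -sum1_card (partition_big a xpredT) //=.
by apply: eq_bigr => k _; rewrite /bsize -sum1_card; apply: eq_bigl => j; rewrite inE.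
Qed.

Lemma bag_le (R : realType) n m (p : 'I_n -> R) (out : 'I_n -> 'I_m) (g : 'I_m -> 'I_m) s :
  (bag_makespan out p s <= makespan (fun j => g (out j)) p s)%E.
Proof.
rewrite /bag_makespan; apply: le_trans (bigmin_le _ [ffun k => g k] _) _.
rewrite le_eqVlt; apply/orP; left; apply/eqP; rewrite /makespan.
by apply: eq_bigr => i _; congr ptime; apply: eq_bigl => j; rewrite ffunE.
Qed.

Lemma makespan_ge0 (R : realType) n m (p : 'I_n -> R) (p1 : forall j, p j = 1)
   (f : 'I_n -> 'I_m) (s : 'I_m -> R) : (0 <= makespan f p s)%E.
Proof.
rewrite (makespanE p1); elim/big_ind: _ => //.
  by move=> x y hx hy; rewrite le_max hx.
by move=> i _; apply: ptime_ge0.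
Qed.

Lemma opt_ge0 (R : realType) n m (p : 'I_n -> R) (p1 : forall j, p j = 1) (s : 'I_m -> R) :
  (0 <= opt p s :> \bar R)%E.
Proof.
rewrite /opt; apply: le_bigmin => [|f _]; first exact: leey.
exact: makespan_ge0.
Qed.

Arguments bag_le {R n m} p out g s.
Arguments makespan_ge0 {R n m p} p1 f s.
Arguments opt_ge0 {R n m p} p1 s.

Theorem theorem3 (R : realType) (n m : nat) (p : 'I_n -> R) (eps alpha : R) :
  (forall j, p j = 1) -> 0 < eps < 1 -> 0 < alpha < 1 ->
  (* (1+eps)(1+alpha)-consistency *)
  (forall s : 'I_m -> R, (forall i, 0 < s i) ->
     forall out, IPR p s alpha eps 2 out ->
       (bag_makespan out p s <= ((1 + eps) * (1 + alpha))%:E * opt p s)%E)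
  /\
  (* (2 + 1/alpha)-robustness *)
  (forall shat s : 'I_m -> R, (forall i, 0 <= shat i) -> (forall i, 0 < s i) ->
     forall out, IPR p shat alpha eps 2 out ->
       (bag_makespan out p s <= (2 + alpha^-1)%:E * opt p s)%E).
Proof.
move=> p1 /andP [e0 e1] /andP [a0 a1]; split.
  move=> s hs out [b0 [[_ st1] loop]].
  have hs' : forall i, 0 <= s i by move=> i; apply: ltW.
  have hopt := makespan_ge0 p1 b0 s.
  have [[own2 Hms] _] := loop_main p1 hs' a0 hopt loop (inv_init p1 hs' a0 hopt b0 erefl).
  apply: le_trans (bag_le p out own2 s) _; apply: le_trans Hms _.
  have -> : (((1 + eps) * (1 + alpha))%:E * opt p s = (1 + alpha)%:E * ((1 + eps)%:E * opt p s))%E.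
    by rewrite muleA -EFinM mulrC.
  apply: lee_wpmul2l => //; rewrite lee_fin; lra.
move=> shat s hsh hs out [b0 [_ loop]].
have hopt := makespan_ge0 p1 b0 shat.
have [_ HP] := loop_main p1 hsh a0 hopt loop (inv_init p1 hsh a0 hopt b0 erefl).
have Cg2 : 2 <= 2 + alpha^-1 :> R by rewrite lerDl invr_ge0 ltW.
case: HP => [Hle1|HC].
  apply: (@le_trans _ _ (opt p s)); last first.
    by apply: lee_pemull; [exact: opt_ge0 p1 s | rewrite lee_fin; lra].
  rewrite /opt; apply: le_bigmin => [|f _]; first exact: leey.
  pose g := [ffun k => if [pick j | out j == k] is Some j then f j else k].
  apply: le_trans (bag_le p out g s) _.
  rewrite le_eqVlt; apply/orP; left; apply/eqP; rewrite /makespan.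
  apply: eq_bigr => i _; congr ptime; apply: eq_bigl => j.
  rewrite /g ffunE; case: pickP => [j' /eqP hj'|hn]; last by have := hn j; rewrite eqxx.
  have -> : j' = j.
    move/card_le1_eqP: (Hle1 (out j)) => H.
    by apply: H; rewrite inE ?hj'.
  by [].
apply: (big_ind (fun x => (bag_makespan out p s <= (2 + alpha^-1)%:E * x)%E)).
- by rewrite muleC gt0_mulye ?leey // lte_fin; lra.
- by move=> x y hx hy; rewrite minEle; case: ifP.
move=> f _.
have [Tr HT] : exists Tr, makespan f p s = Tr%:E.
  rewrite (makespanE p1); elim/big_ind: _ => [|x y [rx ->] [ry ->]|i _]; first by exists 0.
    by rewrite maxEle; case: ifP => _; eexists.
  by rewrite (ptime_pos _ (hs i)); eexists.
have Tr0 : 0 <= Tr by have := makespan_ge0 p1 f s; rewrite HT lee_fin.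
have Hn : forall i, (#|[set j | f j == i]|)%:R <= Tr * s i.
  move=> i; have := le_bigmax 0%E (fun i => ptime (#|[set j | f j == i]|)%:R (s i)) i.
  by rewrite -(makespanE p1) HT (ptime_pos _ (hs i)) lee_fin ler_pdivrMr.
have Hsum : \sum_k (bsize out k)%:R <= \sum_i Tr * s i.
  rewrite -natr_sum sum_bsize -(sum_bsize _ _ f) natr_sum.
  by apply: ler_sum => i _; exact: Hn i.
have [g Hg] := @assign_lemma R m (fun k => (bsize out k)%:R) (fun i => Tr * s i) (2 + alpha^-1) Cg2 (fun k => ler0n _ _) (fun i => mulr_ge0 Tr0 (ltW (hs i))) HC Hsum.
apply: le_trans (bag_le p out g s) _.
rewrite HT (makespanE p1) -EFinM; apply: bigmax_le => [|i _].
  by rewrite lee_fin; apply: mulr_ge0 => //; lra.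
rewrite (ptime_pos _ (hs i)) lee_fin ler_pdivrMr //.
have := Hg i; rewrite -natr_sum -ld_sum /ld mulrA.
by [].
Qed.
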